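(* For $n\in\mathbb{N}$ and $q>0$, let $P_n^{\mathrm{LR}^-;q}$ be the probability measure on the symmetric group $S_n$ given by $$P_n^{\mathrm{LR}^-;q}(\sigma)=\frac{q^{\mathrm{LR}^-_n(\sigma)}}{q(q+1)\cdots(q+n-1)},\qquad \sigma\in S_n,$$ where $\mathrm{LR}^-_n(\sigma)=|\{j\in[n]:\sigma_j=\min\{\sigma_i:1\le i\le j\}\}|$ is the number of left-to-right minima of $\sigma=\sigma_1\sigma_2\cdots\sigma_n$. Let $E_n^{\mathrm{LR}^-;q}$ denote expectation with respect to $P_n^{\mathrm{LR}^-;q}$, and let $\{q_n\}_{n=1}^\infty$ be a sequence of positive numbers. Then: (i) If $q_n=o(\frac1{\log n})$, then $\lim_{n\to\infty}E_n^{\mathrm{LR}^-;q_n}\mathrm{LR}^-_n=1$. (ii) If $\lim_{n\to\infty}q_n\log n=c\in(0,\infty)$, then $\lim_{n\to\infty}E_n^{\mathrm{LR}^-;q_n}\mathrm{LR}^-_n=1+c$. (iii) If $\lim_{n\to\infty}q_n\log n=\infty$ and $q_n=O(1)$, then $E_n^{\mathrm{LR}^-;q_n}\mathrm{LR}^-_n\sim q_n\log n$. (iv) If $q_n\to\infty$ and $q_n=o(n)$, then $E_n^{\mathrm{LR}^-;q_n}\mathrm{LR}^-_n\sim q_n\log\frac{n+q_n}{1+q_n}$. In particular, if $q_n\sim cn^\alpha$ with $c>0$ and $\alpha\in(0,1)$, then $E_n^{\mathrm{LR}^-;q_n}\mathrm{LR}^-_n\sim c(1-\alpha)n^\alpha\log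 n$. (v) If $q_n\sim cn$ with $c>0$, then $E_n^{\mathrm{LR}^-;q_n}\mathrm{LR}^-_n\sim c\big(\log\frac{1+c}{c}\big)n$; moreover $c\log\frac{1+c}{c}\to 0$ as $c\to0$ and $c\log\frac{1+c}{c}\to1$ as $c\to\infty$. (vi) If $\lim_{n\to\infty}\frac{q_n}{n}=\infty$, then $E_n^{\mathrm{LR}^-;q_n}\mathrm{LR}^-_n\sim n$.
   Context: $[n]=\{1,\dots,n\}$. For sequences $a_n,b_n$, $a_n\sim b_n$ means $a_n/b_n\to1$ as $n\to\infty$. *)

(* Defs.v *)
From HB Require Import structures.
From mathcomp Require Import all_boot all_order all_algebra all_fingroup.
From mathcomp Require Import all_classical all_reals all_analysis.
Set Implicit Arguments. Unset Strict Implicit. Unset Printing Implicit Defensive.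
Import Order.TTheory GRing.Theory Num.Theory.
Local Open Scope ring_scope.

(* Number of left-to-right minima of s : 'S_n (positions/values 0-indexed,
   which is order-isomorphic to the 1-indexed convention): position j is a
   left-to-right minimum iff s j = min {s i : i <= j}, i.e. s j <= s i for
   all i <= j. *)
Definition LRmin (n : nat) (s : 'S_n) : nat :=
  #|[set j : 'I_n | [forall i : 'I_n, (i <= j)%N ==> (s j <= s i)%N]]|.

Definition rising (R : realType) (q : R) (n : nat) : R :=
  \prod_(i < n) (q + i%:R).

Definition PLR (R : realType) (q : R) {n : nat} (s : 'S_n) : R :=
  q ^+ LRmin s / rising q n.

Definition ELR (R : realType) (q : R) (n : nat) : R :=
  \sum_(s : 'S_n) (LRmin s)%:R * PLR q s.

(* Main.v *)
Require Import Defs.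
From HB Require Import structures.
From mathcomp Require Import all_boot all_order all_algebra all_fingroup.
From mathcomp Require Import all_classical all_reals all_analysis.
From mathcomp Require Import ring lra.
Set Implicit Arguments. Unset Strict Implicit. Unset Printing Implicit Defensive.
Import Order.TTheory GRing.Theory Num.Theory numFieldNormedType.Exports.
Local Open Scope ring_scope.

Lemma sum_perm_lift (V : nmodType) n (F : 'S_n.+1 -> V) (i0 : 'I_n.+1) :
  \sum_(s : 'S_n.+1) F s = \sum_(j : 'I_n.+1) \sum_(s : 'S_n) F (lift_perm i0 j s).
Proof.
rewrite (partition_big (fun s : 'S_n.+1 => s i0) predT) //=.
apply: eq_bigr => j0 _.
rewrite (reindex (lift_perm i0 j0)); last first.
  pose ulsf i (s : 'S_n.+1) k := odflt k (unlift (s i) (s (lift i k))).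
  have ulsfK i (s : 'S_n.+1) k: lift (s i) (ulsf i s k) = s (lift i k).
    rewrite /ulsf; have:= neq_lift i k.
    by rewrite -(can_eq (permK s)) => /unlift_some[] ? ? ->.
  have inj_ulsf: injective (ulsf i0 _).
    move=> s; apply: can_inj (ulsf (s i0) s^-1%g) _ => k'.
    by rewrite {1}/ulsf ulsfK !permK liftK.
  exists (fun s => perm (inj_ulsf s)) => [s _ | s].
    by apply/permP=> k'; rewrite permE /ulsf lift_perm_lift lift_perm_id liftK.
  move/(s _ =P _) => si0; apply/permP=> k.
  case: (unliftP i0 k) => [k'|] ->; rewrite ?lift_perm_id //.
  by rewrite lift_perm_lift -si0 permE ulsfK.
by apply: eq_bigl => s; rewrite lift_perm_id eqxx.
Qed.

Lemma LRmin_lift n (j : 'I_n.+1) (s : 'S_n) :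
  LRmin (lift_perm ord_max j s) = (LRmin s + (j == ord0))%N.
Proof.
set t := lift_perm ord_max j s.
rewrite /LRmin -!sum1_card big_mkcond [in RHS]big_mkcond /= big_ord_recr /=.
congr addn.
  apply: eq_bigr => k _; rewrite !inE.
  have -> : widen_ord (leqnSn n) k = lift ord_max k by apply: val_inj; rewrite /= /bump leqNgt ltn_ord add0n.
  have -> : [forall i : 'I_n.+1, (i <= lift ord_max k)%N ==> (t (lift ord_max k) <= t i)%N] =
            [forall i : 'I_n, (i <= k)%N ==> (s k <= s i)%N].
    apply/forallP/forallP => H i.
      apply/implyP => Hik; have := implyP (H (lift ord_max i)).
      rewrite /t !lift_perm_lift /= !leq_bump2.
      by apply.
    apply/implyP; case: (unliftP ord_max i) => [i'|] ->.
      rewrite /t !lift_perm_lift /= !leq_bump2 => Hik.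
      exact: (implyP (H i')).
    by rewrite /= /bump (leqNgt n k) ltn_ord add0n leqNgt ltn_ord.
  by [].
rewrite !inE.
have -> : [forall i : 'I_n.+1, (i <= @ord_max n)%N ==> (t ord_max <= t i)%N] = (j == ord0).
  apply/forallP/eqP => [H | Hj].
    have := implyP (H (t^-1 ord0)%g); rewrite leq_ord permKV /t lift_perm_id /=.
    by move=> /(_ isT); rewrite leqn0 => /eqP Hj; apply: val_inj.
  by move=> i; rewrite /t lift_perm_id Hj leq0n implybT.
by case: (j == ord0).
Qed.

Lemma LRmin0 (s : 'S_0) : LRmin s = 0%N.
Proof. by rewrite /LRmin; apply/eqP; rewrite cards_eq0; apply/eqP/setP => [[]]. Qed.

Section Sums.
Variable R : realType.
Variable q : R.

Definition Gs n := \sum_(s : 'S_n) q ^+ LRmin s.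
Definition Hs n := \sum_(s : 'S_n) (LRmin s)%:R * q ^+ LRmin s.

Lemma sum_b0 n (F : bool -> R) :
  \sum_(j < n.+1) F (j == ord0) = F true + F false *+ n.
Proof.
rewrite big_ord_recl eqxx; congr (_ + _).
rewrite (eq_bigr (fun _ => F false)) ?sumr_const ?card_ord // => i _.
Qed.

Lemma Gs_rec n : Gs n.+1 = (q + n%:R) * Gs n.
Proof.
rewrite /Gs (@sum_perm_lift _ _ _ ord_max).
under eq_bigr => j _ do under eq_bigr => s _ do rewrite LRmin_lift exprD.
under eq_bigr => j _ do rewrite -big_distrl /=.
rewrite -big_distrr /= mulrC; congr (_ * _).
by rewrite (sum_b0 n (fun b : bool => q ^+ b)) /= expr1 expr0.
Qed.

Lemma Hs_rec n : Hs n.+1 = (q + n%:R) * Hs n + q * Gs n.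
Proof.
rewrite /Hs /Gs (@sum_perm_lift _ _ _ ord_max).
under eq_bigr => j _ do under eq_bigr => s _ do rewrite LRmin_lift exprD natrD mulrDl.
under eq_bigr => j _ do rewrite big_split /=.
have E (b : bool) : \sum_(s : 'S_n) (LRmin s)%:R * (q ^+ LRmin s * q ^+ b) +
   \sum_(s : 'S_n) b%:R * (q ^+ LRmin s * q ^+ b) = q ^+ b * Hs n + (b%:R * q ^+ b) * Gs n.
  rewrite /Hs /Gs !big_distrr /=; congr (_ + _); apply: eq_bigr => s _; ring.
rewrite (eq_bigr _ (fun j _ => E (j == ord0))).
rewrite (sum_b0 n (fun b : bool => q ^+ b * Hs n + (b%:R * q ^+ b) * Gs n)) /=.
rewrite /Hs /Gs; ring.
Qed.

Lemma Gs_rising n : Gs n = rising q n.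
Proof.
elim: n => [|n IH].
  rewrite /Gs /rising big_ord0 (eq_bigr (fun _ => 1)) => [|s _].
    by rewrite sumr_const card_Sn.
  by rewrite LRmin0.
by rewrite Gs_rec IH /rising big_ord_recr /= mulrC.
Qed.

Definition Ssum n := \sum_(i < n) q / (q + i%:R).

Hypothesis qpos : 0 < q.

Lemma Hs_S n : Hs n = rising q n * Ssum n.
Proof.
elim: n => [|n IH].
  by rewrite /Hs /Ssum big_ord0 mulr0 big1 // => s _; rewrite LRmin0 mul0r.
rewrite Hs_rec IH Gs_rising /Ssum /rising big_ord_recr /= big_ord_recr /=.
have hn : q + n%:R != 0 by rewrite gt_eqF // ltr_pwDl.
by field.
Qed.

Lemma ELR_S n : ELR q n = Ssum n.
Proof.
rewrite /ELR /PLR.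
under eq_bigr => s _ do rewrite mulrA.
rewrite -big_distrl /= -/(Hs n) Hs_S mulrC mulKf //.
rewrite gt_eqF // /rising prodr_gt0 // => i _.
by rewrite ltr_pwDl.
Qed.
End Sums.


Section Bounds.
Variable R : realType.
Implicit Types x y : R.

Lemma L1 x : 0 < x -> ln (x + 1) - ln x <= x^-1.
Proof.
move=> x0.
have -> : ln (x + 1) - ln x = ln (1 + x^-1).
  rewrite -ln_div ?posrE ?(addr_gt0 x0) //; congr ln.
  by rewrite mulrDl divff ?gt_eqF // mul1r addrC.
apply: le_ln1Dx; apply: (@lt_le_trans _ _ 0); first by rewrite ltrN10.
by rewrite invr_ge0 ltW.
Qed.

Lemma L2 x : 1 < x -> x^-1 <= ln x - ln (x - 1).
Proof.
move=> x1; have x0 : 0 < x by apply: lt_trans x1.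
have xi : x^-1 < 1 by rewrite invf_lt1.
have E : ln (x - 1) - ln x = ln (1 + - x^-1).
  rewrite -ln_div ?posrE ?subr_gt0 //.
  by congr ln; rewrite mulrBl divff ?gt_eqF // mul1r.
have : ln (1 + - x^-1) <= - x^-1 by apply: le_ln1Dx; rewrite ltrN2.
lra.
Qed.

Definition Ss (q : R) n := \sum_(i < n) q / (q + i%:R).

Variable q : R.
Hypothesis q0 : 0 < q.

Lemma SsS n : Ss q n.+1 = Ss q n + q / (q + n%:R).
Proof. by rewrite /Ss big_ord_recr. Qed.

Lemma Ss1 : Ss q 1 = 1.
Proof. by rewrite SsS /Ss big_ord0 addr0 add0r divff ?gt_eqF. Qed.

Lemma term_le1 (i : nat) : q / (q + i%:R) <= 1.
Proof. by rewrite ler_pdivrMr ?mul1r ?lerDl ?ltr_wpDr. Qed.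

Lemma term_gt0 (i : nat) : 0 < q / (q + i%:R).
Proof. by rewrite divr_gt0 ?ltr_wpDr. Qed.

Lemma B2 n : Ss q n <= n%:R.
Proof.
elim: n => [|n IH]; first by rewrite /Ss big_ord0.
by rewrite SsS -natr1 lerD // term_le1.
Qed.

Lemma B3 n : n%:R * (q / (q + n%:R)) <= Ss q n.
Proof.
rewrite mulr_natl -[n in _ *+ n]card_ord -sumr_const; apply: ler_sum => i _.
rewrite ler_pM2l // lef_pV2 ?posrE ?ltr_wpDr // lerD2l ler_nat ltnW //.
Qed.

Lemma B4 m : Ss q m.+2 <= 1 + q + q * ln (m.+1)%:R.
Proof.
elim: m => [|m IH].
  rewrite SsS Ss1 ln1 mulr0 addr0 lerD2l ler_pdivrMr ?ltr_wpDr //.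
  by rewrite ler_peMr ?(ltW q0) // lerDr (ltW q0).
rewrite SsS.
have h1 : q / (q + (m.+2)%:R) <= q * (ln (m.+2)%:R - ln (m.+1)%:R).
  apply: (@le_trans _ _ (q * ((m.+2)%:R)^-1)).
    rewrite ler_pM2l // lef_pV2 ?posrE ?ltr0n ?addr_gt0 // lerDr; exact: ltW.
  rewrite ler_pM2l //.
  have := (@L2 (m.+2)%:R); rewrite ltr1n => /(_ isT).
  by rewrite -natr1 addrK natr1.
have e : q * (ln (m.+2)%:R - ln (m.+1)%:R) = q * ln (m.+2)%:R - q * ln (m.+1)%:R by ring.
lra.
Qed.

Lemma B4' n : (0 < n)%N -> Ss q n <= 1 + q + q * ln n%:R.
Proof.
case: n => [//|[|m]] _; first by rewrite Ss1 ln1 mulr0 addr0 lerDl ltW.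
apply: (le_trans (B4 m)); rewrite lerD2l ler_pM2l // ler_ln ?posrE ?ltr0n // ler_nat. by [].
Qed.

Lemma B5 m : 1 + q * (ln (q + (m.+1)%:R) - ln (q + 1)) <= Ss q m.+1.
Proof.
elim: m => [|m IH]; first by rewrite Ss1 subrr mulr0 addr0.
rewrite SsS.
have h1 : q * (ln (q + (m.+2)%:R) - ln (q + (m.+1)%:R)) <= q / (q + (m.+1)%:R).
  rewrite ler_pM2l //.
  have := (@L1 (q + (m.+1)%:R)); rewrite ltr_wpDr // => /(_ isT).
  by rewrite -addrA natr1.
have e1 : q * (ln (q + (m.+2)%:R) - ln (q + 1)) = q * (ln (q + (m.+2)%:R) - ln (q + (m.+1)%:R)) + q * (ln (q + (m.+1)%:R) - ln (q + 1)) by ring.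
lra.
Qed.

Lemma B6 m : Ss q m.+1 <= 1 + q * (ln (q + m%:R) - ln q).
Proof.
elim: m => [|m IH]; first by rewrite Ss1 addr0 subrr mulr0 addr0.
rewrite SsS.
have h1 : q / (q + (m.+1)%:R) <= q * (ln (q + (m.+1)%:R) - ln (q + m%:R)).
  rewrite ler_pM2l //.
  have := (@L2 (q + (m.+1)%:R)).
  rewrite -natr1 addrA addrK; apply; rewrite ltrDr.
  exact: ltr_wpDr.
have e1 : q * (ln (q + (m.+1)%:R) - ln q) = q * (ln (q + (m.+1)%:R) - ln (q + m%:R)) + q * (ln (q + m%:R) - ln q) by ring.
lra.
Qed.

Lemma B6' m : Ss q m.+1 <= 2 + q * (ln (q + (m.+1)%:R) - ln (q + 1)).
Proof.
have h1 := B6 m.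
have h2 : ln (q + m%:R) <= ln (q + (m.+1)%:R).
  by rewrite ler_ln ?posrE ?ltr_wpDr // lerD2l ler_nat.
have h3 : q * (ln (q + 1) - ln q) <= 1.
  have := @L1 q q0; rewrite -(ler_pM2l q0) mulfV ?gt_eqF //.
have h4 : q * ln (q + m%:R) <= q * ln (q + (m.+1)%:R) by rewrite ler_pM2l.
have e1 : q * (ln (q + m%:R) - ln q) = q * ln (q + m%:R) - q * ln q by ring.
have e2 : q * (ln (q + (m.+1)%:R) - ln (q + 1)) = q * ln (q + (m.+1)%:R) - q * ln (q + 1) by ring.
have e3 : q * (ln (q + 1) - ln q) = q * ln (q + 1) - q * ln q by ring.
lra.
Qed.

End Bounds.


Local Open Scope classical_set_scope.
Section Lim.
Variable R : realType.

Lemma ELR_Ss (q : R) n : 0 < q -> ELR q n = Ss q n.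
Proof. by move=> q0; rewrite (ELR_S q0 n). Qed.

Lemma lny {T} {F : set_system T} {FF : Filter F} (f : T -> R) :
  f @ F --> +oo -> (fun x => ln (f x)) @ F --> +oo.
Proof.
move=> /cvgryPge fy; apply/cvgryPge => A.
apply: filterS (fy (expR A)) => x hx.
have fx0 : 0 < f x by apply: lt_le_trans hx; exact: expR_gt0.
by rewrite -[A]expRK ler_ln ?posrE ?expR_gt0.
Qed.

Lemma lnn_y : (fun n : nat => ln (n%:R : R)) @ \oo --> +oo.
Proof. exact: (@lny _ _ _ (fun n : nat => (n%:R : R)) cvgr_idn). Qed.

Lemma lnn_gt0 : \forall n \near \oo, 0 < ln (n%:R : R).
Proof. by have /cvgryPgt := lnn_y; apply. Qed.

Lemma invlnn_0 : (fun n : nat => (ln (n%:R : R))^-1) @ \oo --> 0.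
Proof.
have := @gtr0_cvgV0 R nat \oo _ (fun n : nat => ln (n%:R : R)) lnn_gt0.
by move=> [_ H]; apply: H lnn_y.
Qed.


Lemma near_eq_cvgr (f g : nat -> R) (l : R) :
  (\forall n \near \oo, f n = g n) -> g @ \oo --> l -> f @ \oo --> l.
Proof.
move=> e hg; apply: (squeeze_cvgr _ hg hg).
by apply: filterS e => n ->; rewrite lexx.
Qed.

Lemma qto0 (q : nat -> R) (c : R) :
  (fun n : nat => q n * ln (n%:R : R)) @ \oo --> c -> q @ \oo --> 0.
Proof.
move=> hq.
have h : (fun n : nat => q n * ln (n%:R : R) * (ln (n%:R : R))^-1) @ \oo --> c * 0.
  by apply: cvgM => //; exact: invlnn_0.
rewrite mulr0 in h.
have e : \forall n \near \oo, q n = q n * ln (n%:R : R) * (ln (n%:R : R))^-1.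
  by apply: filterS lnn_gt0 => n hn /=; rewrite mulfK ?gt_eqF.
exact: (near_eq_cvgr e h).
Qed.

Lemma LB1 (q : R) n : 0 < q -> (0 < n)%N -> 1 <= Ss q n.
Proof.
move=> q0; case: n => // m _; apply: le_trans (B5 q0 m).
rewrite lerDl mulr_ge0 ?(ltW q0) // subr_ge0 ler_ln ?posrE ?addr_gt0 ?ltr0n //.
by rewrite lerD2l ler1n.
Qed.

Lemma LB2 (q : R) n : 0 < q -> (0 < n)%N -> 1 + q * ln n%:R - q * q <= Ss q n.
Proof.
move=> q0; case: n => // m _; apply: le_trans (B5 q0 m).
have h1 : ln (m.+1)%:R <= ln (q + (m.+1)%:R).
  by rewrite ler_ln ?posrE ?addr_gt0 ?ltr0n // lerDr ltW.
have h2 : ln (q + 1) <= q by rewrite addrC le_ln1Dx // (lt_trans _ q0) // ltrN10.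
have h3 : q * ln (m.+1)%:R <= q * ln (q + (m.+1)%:R) by rewrite ler_pM2l.
have h4 : q * ln (q + 1) <= q * q by rewrite ler_pM2l.
have e : q * (ln (q + (m.+1)%:R) - ln (q + 1)) = q * ln (q + (m.+1)%:R) - q * ln (q + 1) by ring.
lra.
Qed.

Lemma Dform (q : R) n : 0 < q -> ln ((n%:R + q) / (1 + q)) = ln (q + n%:R) - ln (q + 1).
Proof.
move=> q0; have h1 : 0 < n%:R + q by apply: ltr_wpDl.
have h2 : 0 < 1 + q by apply: addr_gt0.
rewrite ln_div ?posrE //.
by rewrite [n%:R + q]addrC [1 + q]addrC.
Qed.

Lemma DB (q : R) n : 0 < q -> (0 < n)%N ->
  1 + q * ln ((n%:R + q) / (1 + q)) <= Ss q n <= 2 + q * ln ((n%:R + q) / (1 + q)).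
Proof.
move=> q0; case: n => // m _; rewrite Dform //.
by rewrite (B5 q0 m) (B6' q0 m).
Qed.

Lemma part1 (q : nat -> R) : (forall n, (0 < n)%N -> 0 < q n) ->
     (fun n : nat => q n * ln (n%:R : R)) @ \oo --> (0 : R) ->
     (fun n : nat => ELR (q n) n) @ \oo --> (1 : R).
Proof.
move=> qpos hq; have q0 := qto0 hq.
apply: (@squeeze_cvgr _ _ _ _ (fun=> 1) (fun n => 1 + q n + q n * ln (n%:R : R))).
- near=> n; have n0 : (0 < n)%N by near: n; exact: nbhs_infty_gt.
  rewrite ELR_Ss ?qpos // LB1 ?qpos //=. have hh := B4' (qpos _ n0) n0. exact hh.
- exact: cvg_cst.
- by rewrite -[X in _ --> X]addr0 -[X in _ --> X + _]addr0; apply: cvgD => //; apply: cvgD => //; exact: cvg_cst.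
Unshelve. all: by end_near.
Qed.


Lemma inv0_of_y (f : nat -> R) : f @ \oo --> +oo -> (fun n => (f n)^-1) @ \oo --> 0.
Proof.
move=> fy.
have fp : \forall n \near \oo, 0 < f n by have /cvgryPgt := fy; apply.
by have [_ H] := @gtr0_cvgV0 R nat \oo _ f fp; apply: H.
Qed.

Lemma part2 (q : nat -> R) (c : R) : (forall n, (0 < n)%N -> 0 < q n) -> 0 < c ->
     (fun n : nat => q n * ln (n%:R : R)) @ \oo --> c ->
     (fun n : nat => ELR (q n) n) @ \oo --> 1 + c.
Proof.
move=> qpos c0 hq; have q0 := qto0 hq.
apply: (@squeeze_cvgr _ _ _ _ (fun n => 1 + q n * ln (n%:R : R) - q n * q n)
   (fun n => 1 + q n + q n * ln (n%:R : R))).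
- near=> n; have n0 : (0 < n)%N by near: n; exact: nbhs_infty_gt.
  rewrite ELR_Ss ?qpos // LB2 ?qpos //=; have hh := B4' (qpos _ n0) n0. exact hh.
- have -> : 1 + c = 1 + c - 0 * 0 by rewrite mulr0 subr0.
  apply: cvgB; last exact: cvgM.
  by apply: cvgD => //; exact: cvg_cst.
- have -> : 1 + c = 1 + 0 + c by rewrite addr0.
  by apply: cvgD => //; apply: cvgD => //; exact: cvg_cst.
Unshelve. all: by end_near.
Qed.

Lemma part3 (q : nat -> R) : (forall n, (0 < n)%N -> 0 < q n) ->
     (fun n : nat => q n * ln (n%:R : R)) @ \oo --> +oo ->
     (exists M : R, \forall n \near \oo, `|q n| <= M) ->
     (fun n : nat => ELR (q n) n / (q n * ln (n%:R : R))) @ \oo --> (1 : R).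
Proof.
move=> qpos hq [M hM].
have iq := inv0_of_y hq.
have qlp : \forall n \near \oo, 0 < q n * ln (n%:R : R) by have /cvgryPgt := hq; apply.
apply: (@squeeze_cvgr _ _ _ _ (fun n => 1 - M ^+ 2 * (q n * ln (n%:R : R))^-1)
   (fun n => 1 + (q n * ln (n%:R : R))^-1 + (ln (n%:R : R))^-1)).
- near=> n; have n0 : (0 < n)%N by near: n; exact: nbhs_infty_gt.
  have qn0 := qpos _ n0.
  have hX : 0 < q n * ln (n%:R : R) by near: n.
  have hL : 0 < ln (n%:R : R) by near: n; exact: lnn_gt0.
  have hMn : `|q n| <= M by near: n.
  rewrite ELR_Ss //.
  have l2 := LB2 qn0 n0; have u4 := B4' qn0 n0.
  set X := q n * ln (n%:R : R) in hX l2 u4 *.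
  have qM : q n * q n <= M ^+ 2.
    rewrite expr2; have : q n <= M by rewrite (le_trans _ hMn) // ler_norm.
    by move=> h; apply: ler_pM => //; apply: ltW.
  apply/andP; split.
    rewrite ler_pdivlMr //.
    have -> : (1 - M ^+ 2 * X^-1) * X = X - M ^+ 2 by field; rewrite gt_eqF.
    lra.
  rewrite ler_pdivrMr //.
  have -> : (1 + X^-1 + (ln (n%:R : R))^-1) * X = X + 1 + q n.
    by rewrite /X; field; rewrite !gt_eqF.
  lra.
- have h : (fun n => 1 - M ^+ 2 * (q n * ln (n%:R : R))^-1) @ \oo --> 1 - M ^+ 2 * 0.
    by apply: cvgB; [exact: cvg_cst | exact: cvgMl_tmp].
  by rewrite mulr0 subr0 in h.
- have h : (fun n => 1 + (q n * ln (n%:R : R))^-1 + (ln (n%:R : R))^-1) @ \oo --> (1 + 0 + 0 : R).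
    by apply: cvgD; [apply: cvgD => //; exact: cvg_cst | exact: invlnn_0].
  by rewrite !addr0 in h.
Unshelve. all: by end_near.
Qed.

Lemma part6 (q : nat -> R) : (forall n, (0 < n)%N -> 0 < q n) ->
     (fun n : nat => q n / n%:R) @ \oo --> +oo ->
     (fun n : nat => ELR (q n) n / n%:R) @ \oo --> (1 : R).
Proof.
move=> qpos hq.
have hq1 : (fun n => q n / n%:R + 1) @ \oo --> +oo.
  apply: (ger_cvgy _ hq); near=> n; by rewrite lerDl.
have iq := inv0_of_y hq1.
apply: (@squeeze_cvgr _ _ _ _ (fun n => 1 - (q n / n%:R + 1)^-1) (fun=> 1)).
- near=> n; have n0 : (0 < n)%N by near: n; exact: nbhs_infty_gt.
  have qn0 := qpos _ n0.
  have nr0 : (0 : R) < n%:R by rewrite ltr0n.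
  rewrite ELR_Ss //; apply/andP; split.
    have -> : 1 - (q n / n%:R + 1)^-1 = (n%:R * (q n / (q n + n%:R))) / n%:R.
      field; rewrite !gt_eqF ?addr_gt0 ?divr_gt0 //.
    by rewrite ler_pM2r ?invr_gt0 // B3.
  by rewrite ler_pdivrMr // mul1r B2.
- have h : (fun n => 1 - (q n / n%:R + 1)^-1) @ \oo --> (1 - 0 : R).
    by apply: cvgB => //; exact: cvg_cst.
  by rewrite subr0 in h.
- exact: cvg_cst.
Unshelve. all: by end_near.
Qed.


Lemma halfy (f : nat -> R) : f @ \oo --> +oo -> (fun n => f n / 2) @ \oo --> +oo.
Proof.
move=> /cvgryPge fy; apply/cvgryPge => A.
by apply: filterS (fy (A * 2)) => n hn; rewrite ler_pdivlMr.
Qed.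

Lemma ratio_sq (E X : nat -> R) :
  X @ \oo --> +oo ->
  (\forall n \near \oo, 1 + X n <= E n <= 2 + X n) ->
  (fun n => E n / X n) @ \oo --> (1 : R).
Proof.
move=> hX hE.
have iX := inv0_of_y hX.
have Xp : \forall n \near \oo, 0 < X n by have /cvgryPgt := hX; apply.
apply: (@squeeze_cvgr _ _ _ _ (fun=> 1) (fun n => 1 + 2 * (X n)^-1)).
- near=> n.
  have x0 : 0 < X n by near: n.
  have /andP[h1 h2] : 1 + X n <= E n <= 2 + X n by near: n.
  apply/andP; split.
    by rewrite ler_pdivlMr // mul1r; lra.
  rewrite ler_pdivrMr //.
  have -> : (1 + 2 * (X n)^-1) * X n = X n + 2 by field; rewrite gt_eqF.
  lra.
- exact: cvg_cst.
- have h : (fun n => 1 + 2 * (X n)^-1) @ \oo --> (1 + 2 * 0 : R).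
    by apply: cvgD; [exact: cvg_cst | exact: cvgMl_tmp].
  by rewrite mulr0 addr0 in h.
Unshelve. all: by end_near.
Qed.

Lemma part4 (q : nat -> R) : (forall n, (0 < n)%N -> 0 < q n) ->
     q @ \oo --> +oo ->
     (fun n : nat => q n / n%:R) @ \oo --> (0 : R) ->
     (fun n : nat => ELR (q n) n / (q n * ln ((n%:R + q n) / (1 + q n))))
        @ \oo --> (1 : R).
Proof.
move=> qpos qy qn0.
have qnp : \forall n \near \oo, 0 < q n / n%:R.
  near=> n; have n0 : (0 < n)%N by near: n; exact: nbhs_infty_gt.
  by rewrite divr_gt0 ?qpos ?ltr0n.
have nqy : (fun n => (q n / n%:R)^-1) @ \oo --> +oo.
  by have [_ H] := @cvgrVy R nat \oo _ (fun n => q n / n%:R) qnp; apply: H.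
have h2 := halfy nqy.
have lh2 := lny h2.
apply: ratio_sq.
  apply: (@ger_cvgy _ _ _ _ (fun n => ln ((q n / n%:R)^-1 / 2))); last exact: lh2.
  near=> n; have n0 : (0 < n)%N by near: n; exact: nbhs_infty_gt.
  have q1 : 1 <= q n by near: n; have /cvgryPge := qy; apply.
  have qn0' := qpos _ n0.
  have nr : (1 : R) <= n%:R by rewrite ler1n.
  set D := ln ((n%:R + q n) / (1 + q n)).
  have D0 : 0 <= D.
    by rewrite ln_ge0 // ler_pdivlMr ?mul1r ?lerD2r ?addr_gt0.
  have nr0 : (0 : R) < n%:R by rewrite ltr0n.
  have a1 : (q n / n%:R)^-1 / 2 = n%:R / (q n * 2) by rewrite invf_div -mulrA -invfM.
  have a2 : n%:R / (q n * 2) <= n%:R / (1 + q n).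
    rewrite ler_pM2l // lef_pV2 ?posrE ?mulr_gt0 ?addr_gt0 //; lra.
  have a3 : n%:R / (1 + q n) <= (n%:R + q n) / (1 + q n).
    rewrite ler_pM2r ?invr_gt0 ?addr_gt0 //; lra.
  have hD : ln ((q n / n%:R)^-1 / 2) <= D.
    rewrite a1 ler_ln ?posrE ?divr_gt0 ?mulr_gt0 ?addr_gt0 //; last by lra.
  have hqD : D <= q n * D by rewrite ler_peMl.
  exact: le_trans hD hqD.
near=> n; have n0 : (0 < n)%N by near: n; exact: nbhs_infty_gt.
rewrite ELR_Ss ?qpos //; exact: (DB (qpos _ n0) n0).
Unshelve. all: by end_near.
Qed.


Lemma part5 (q : nat -> R) (c : R) : (forall n, (0 < n)%N -> 0 < q n) -> 0 < c ->
     (fun n : nat => q n / (c * n%:R)) @ \oo --> (1 : R) ->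
     (fun n : nat => ELR (q n) n / (c * ln ((1 + c) / c) * n%:R)) @ \oo --> (1 : R).
Proof.
move=> qpos c0 hr.
set L := ln ((1 + c) / c).
have L1 : 1 < (1 + c) / c by rewrite ltr_pdivlMr // mul1r ltrDr.
have L0 : 0 < L by rewrite /L ln_gt0.
have in0 := inv0_of_y (@cvgr_idn R).
have Dl : (fun n => ln ((n%:R + q n) / (1 + q n))) @ \oo --> L.
  have h : (fun n => (1 + c * (q n / (c * n%:R))) / ((n%:R)^-1 + c * (q n / (c * n%:R))))
      @ \oo --> (1 + c * 1) / (0 + c * 1).
    apply: cvgM.
      by apply: cvgD; [exact: cvg_cst | exact: cvgMl_tmp].
    apply: cvgV; first by rewrite add0r mulr1 gt_eqF.
    by apply: cvgD => //; exact: cvgMl_tmp.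
  rewrite mulr1 add0r in h.
  have h2 : (fun n => ln ((1 + c * (q n / (c * n%:R))) / ((n%:R)^-1 + c * (q n / (c * n%:R)))))
      @ \oo --> L.
    exact: (continuous_cvg _ (continuous_ln (lt_trans ltr01 L1)) h).
  apply: (near_eq_cvgr _ h2).
  near=> n; have n0 : (0 < n)%N by near: n; exact: nbhs_infty_gt.
  have qn0 := qpos _ n0.
  have nr0 : (0 : R) < n%:R by rewrite ltr0n.
  rewrite /=; congr ln; field.
  by rewrite !gt_eqF ?addr_gt0 ?ltr_wpDr ?ltW ?invr_gt0 ?divr_gt0 ?mulr_gt0.
apply: (@squeeze_cvgr _ _ _ _ (fun n => q n / (c * n%:R) * (ln ((n%:R + q n) / (1 + q n)) / L))
   (fun n => q n / (c * n%:R) * (ln ((n%:R + q n) / (1 + q n)) / L) + 2 / (c * L) * (n%:R)^-1)).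
- near=> n; have n0 : (0 < n)%N by near: n; exact: nbhs_infty_gt.
  have qn0 := qpos _ n0.
  have nr0 : (0 : R) < n%:R by rewrite ltr0n.
  rewrite ELR_Ss //.
  have /andP[h1 h2] := DB qn0 n0.
  set D := ln ((n%:R + q n) / (1 + q n)) in h1 h2 *.
  have e1 : q n / (c * n%:R) * (D / L) = (q n * D) / (c * L * n%:R).
    by field; rewrite !gt_eqF.
  have e2 : q n / (c * n%:R) * (D / L) + 2 / (c * L) * (n%:R)^-1 = (2 + q n * D) / (c * L * n%:R).
    by field; rewrite !gt_eqF.
  rewrite e2 e1; apply/andP; split.
    by rewrite ler_pM2r ?invr_gt0 ?mulr_gt0 //; lra.
  by rewrite ler_pM2r ?invr_gt0 ?mulr_gt0.
- have h : (fun n => q n / (c * n%:R) * (ln ((n%:R + q n) / (1 + q n)) / L)) @ \oo --> 1 * (L / L).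
    by apply: cvgM => //; exact: cvgMr_tmp.
  by rewrite divff ?gt_eqF // mulr1 in h.
- have h : (fun n => q n / (c * n%:R) * (ln ((n%:R + q n) / (1 + q n)) / L) + 2 / (c * L) * (n%:R)^-1)
     @ \oo --> 1 * (L / L) + 2 / (c * L) * 0.
    apply: cvgD; first by apply: cvgM => //; exact: cvgMr_tmp.
    exact: cvgMl_tmp.
  by rewrite divff ?gt_eqF // mulr1 mulr0 addr0 in h.
Unshelve. all: by end_near.
Qed.


Lemma climy : (fun c : R => c * ln ((1 + c) / c)) @ +oo --> (1 : R).
Proof.
have cy : (fun c : R => c + 1) @ +oo --> +oo.
  apply: (@ger_cvgy _ _ _ _ id); last exact: cvg_id.
  by near=> c; rewrite lerDl.
have cp : \forall c \near +oo, 0 < (c : R) + 1.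
  near=> c; have c0 : 0 < c by near: c; apply: nbhs_pinfty_gt; rewrite num_real.
  by rewrite addr_gt0.
have ic : (fun c : R => (c + 1)^-1) @ +oo --> 0.
  by have [_ H] := @gtr0_cvgV0 R R +oo _ (fun c => c + 1) cp; apply: H.
apply: (@squeeze_cvgr _ _ _ _ (fun c => 1 - (c + 1)^-1) (fun=> 1)).
- near=> c.
  have c0 : 0 < c by near: c; apply: nbhs_pinfty_gt; rewrite num_real.
  have e : ln ((1 + c) / c) = ln (c + 1) - ln c.
    by rewrite [1 + c]addrC ln_div ?posrE ?addr_gt0.
  rewrite e; apply/andP; split.
    have := @L2 _ (c + 1); rewrite ltrDr => /(_ c0); rewrite addrK => h.
    have -> : 1 - (c + 1)^-1 = c * (c + 1)^-1 by field; rewrite gt_eqF ?addr_gt0.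
    by rewrite ler_pM2l.
  have := @L1 _ c c0 => h.
  have cn0 : c != 0 by rewrite gt_eqF.
  by rewrite -[X in _ <= X](mulfV cn0) ler_pM2l.
- have h : (fun c : R => 1 - (c + 1)^-1) @ +oo --> (1 - 0 : R).
    by apply: cvgB => //; exact: cvg_cst.
  by rewrite subr0 in h.
- exact: cvg_cst.
Unshelve. all: by end_near.
Qed.

Lemma ln_le_sqrt (y : R) : 0 < y -> ln y <= 2 * Num.sqrt y.
Proof.
move=> y0; have s0 : 0 < Num.sqrt y by rewrite sqrtr_gt0.
have -> : ln y = ln (Num.sqrt y ^+ 2) by rewrite sqr_sqrtr // ltW.
rewrite lnXn // mulr2n.
have : ln (1 + (Num.sqrt y - 1)) <= Num.sqrt y - 1.
  apply: le_ln1Dx; lra.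
rewrite addrC subrK => h; lra.
Qed.

Lemma clim0 : (fun c : R => c * ln ((1 + c) / c)) @ 0^'+ --> (0 : R).
Proof.
have hs : (fun c : R => 2 * Num.sqrt (c * (1 + c))) @ 0^'+ --> (0 : R).
  apply: cvg_at_right_filter.
  have h1 : (fun c : R => c * (1 + c)) @ 0 --> (0 * (1 + 0) : R).
    by apply: cvgM; [exact: cvg_id | apply: cvgD; [exact: cvg_cst | exact: cvg_id]].
  rewrite mul0r in h1.
  have h2 : (fun c : R => Num.sqrt (c * (1 + c))) @ 0 --> Num.sqrt (0 : R).
    exact: (continuous_cvg _ (@sqrt_continuous R 0) h1).
  rewrite sqrtr0 in h2.
  have h3 : (fun c : R => 2 * Num.sqrt (c * (1 + c))) @ 0 --> (2 * 0 : R).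
    exact: cvgMl_tmp.
  by rewrite mulr0 in h3.
apply: (@squeeze_cvgr _ _ _ _ (fun=> 0) (fun c => 2 * Num.sqrt (c * (1 + c)))).
- near=> c.
  have c0 : 0 < c by near: c; exact: nbhs_right_gt.
  have y0 : 0 < (1 + c) / c by rewrite divr_gt0 ?addr_gt0.
  apply/andP; split.
    apply: mulr_ge0; first exact: ltW.
    apply: ln_ge0; rewrite ler_pdivlMr // mul1r; lra.
  have h := ln_le_sqrt y0.
  have e : c * Num.sqrt ((1 + c) / c) = Num.sqrt (c * (1 + c)).
    have -> : c * (1 + c) = c ^+ 2 * ((1 + c) / c) by field; rewrite gt_eqF.
    by rewrite [in RHS]sqrtrM ?sqr_ge0 // sqrtr_sqr ger0_norm // ltW.
  rewrite -e.
  have : c * ln ((1 + c) / c) <= c * (2 * Num.sqrt ((1 + c) / c)) by rewrite ler_pM2l.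
  have -> : c * (2 * Num.sqrt ((1 + c) / c)) = 2 * (c * Num.sqrt ((1 + c) / c)) by ring.
  by [].
- exact: cvg_cst.
- exact: hs.
Unshelve. all: by end_near.
Qed.


Lemma scaley (f : nat -> R) (k : R) : 0 < k -> f @ \oo --> +oo -> (fun n => k * f n) @ \oo --> +oo.
Proof.
move=> k0 /cvgryPge fy; apply/cvgryPge => A.
by apply: filterS (fy (A / k)) => n; rewrite ler_pdivrMr // mulrC.
Qed.

Lemma part4b (q : nat -> R) (c a : R) : (forall n, (0 < n)%N -> 0 < q n) ->
     0 < c -> 0 < a < 1 ->
     (fun n : nat => q n / (c * (n%:R `^ a))) @ \oo --> (1 : R) ->
     (fun n : nat => ELR (q n) n / (c * (1 - a) * (n%:R `^ a) * ln (n%:R : R)))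
        @ \oo --> (1 : R).
Proof.
move=> qpos c0 /andP[a0 a1] hr.
have a10 : 0 < 1 - a by rewrite subr_gt0.
have n2 : \forall n \near \oo, (1 < n)%N by exact: nbhs_infty_gt.
have Py : (fun n : nat => (n%:R : R) `^ a) @ \oo --> +oo.
  apply: (@ger_cvgy _ _ _ _ (fun n => a * ln (n%:R : R))); last exact: (scaley a0 lnn_y).
  near=> n; have n0 : (1 < n)%N by near: n.
  rewrite -ln_powR ltW // ln_sublinear // powR_gt0 // ltr0n; exact: ltn_trans _ n0.
have iP := inv0_of_y Py.
have il := invlnn_0.
have uc : (fun n => (n%:R `^ a)^-1 + c * (q n / (c * (n%:R `^ a)))) @ \oo --> (0 + c * 1 : R).
  by apply: cvgD => //; exact: cvgMl_tmp.
rewrite add0r mulr1 in uc.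
have lu : (fun n => ln ((n%:R `^ a)^-1 + c * (q n / (c * (n%:R `^ a))))) @ \oo --> ln c.
  exact: (continuous_cvg _ (continuous_ln c0) uc).
have t1 : (fun n => ln ((n%:R `^ a)^-1 + c * (q n / (c * (n%:R `^ a)))) * (ln (n%:R : R))^-1)
    @ \oo --> (ln c * 0 : R).
  by apply: cvgM.
rewrite mulr0 in t1.
have t2 : (fun n => ln (1 + q n / n%:R) * (ln (n%:R : R))^-1) @ \oo --> (0 : R).
  have hb : (fun n => c * (q n / (c * (n%:R `^ a))) * (ln (n%:R : R))^-1) @ \oo --> (c * 1 * 0 : R).
    by apply: cvgM => //; exact: cvgMl_tmp.
  rewrite mulr0 in hb.
  apply: (@squeeze_cvgr _ _ _ _ (fun=> 0) _ _ _ _ (cvg_cst _) hb).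
  near=> n; have n1 : (1 < n)%N by near: n.
  have n0 : (0 < n)%N by apply: ltn_trans n1.
  have qn0 := qpos _ n0.
  have nr : (1 : R) < n%:R by rewrite ltr1n.
  have l0 : 0 < ln (n%:R : R) by rewrite ln_gt0.
  have P0 : 0 < (n%:R : R) `^ a by rewrite powR_gt0 // ltr0n.
  have Pn : (n%:R : R) `^ a <= n%:R by rewrite ler1_powR ?ltW.
  have qn : 0 <= q n / n%:R by rewrite divr_ge0 ?ltW ?ltr0n.
  apply/andP; split.
    apply: mulr_ge0; last by rewrite invr_ge0 ltW.
    by rewrite ln_ge0 // lerDl.
  rewrite ler_pM2r ?invr_gt0 //.
  apply: (le_trans (le_ln1Dx _)); first by lra.
  have -> : c * (q n / (c * n%:R `^ a)) = q n / n%:R `^ a by field; rewrite !gt_eqF.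
  by rewrite ler_pM2l // lef_pV2 ?posrE ?ltr0n.
have Dl : (fun n => ln ((n%:R + q n) / (1 + q n)) / ln (n%:R : R)) @ \oo --> 1 - a.
  have h : (fun n => 1 - a + ln (1 + q n / n%:R) * (ln (n%:R : R))^-1
       - ln ((n%:R `^ a)^-1 + c * (q n / (c * (n%:R `^ a)))) * (ln (n%:R : R))^-1)
       @ \oo --> (1 - a + 0 - 0 : R).
    apply: cvgB => //; apply: cvgD => //; exact: cvg_cst.
  rewrite addr0 subr0 in h.
  apply: (near_eq_cvgr _ h).
  near=> n; have n1 : (1 < n)%N by near: n.
  have n0 : (0 < n)%N by apply: ltn_trans n1.
  have qn0 := qpos _ n0.
  have nr : (1 : R) < n%:R by rewrite ltr1n.
  have nr0 : (0 : R) < n%:R by rewrite ltr0n.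
  have l0 : 0 < ln (n%:R : R) by rewrite ln_gt0.
  have P0 : 0 < (n%:R : R) `^ a by rewrite powR_gt0.
  have qn1 : 0 < 1 + q n / n%:R by rewrite addr_gt0 // divr_gt0.
  have cP : 0 < c * n%:R `^ a by rewrite mulr_gt0.
  have u0 : 0 < (n%:R `^ a)^-1 + c * (q n / (c * (n%:R `^ a)))
    by rewrite addr_gt0 ?invr_gt0 // mulr_gt0 // divr_gt0.
  have e1 : ln (n%:R + q n) = ln (n%:R : R) + ln (1 + q n / n%:R).
    rewrite -lnM ?posrE //; congr ln; field; exact: lt0r_neq0.
  have e2 : ln (1 + q n) = a * ln (n%:R : R) + ln ((n%:R `^ a)^-1 + c * (q n / (c * (n%:R `^ a)))).
    rewrite -ln_powR -lnM ?posrE //.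
    by congr ln; field; rewrite !lt0r_neq0.
  have np : 0 < n%:R + q n by rewrite addr_gt0.
  have qp : 0 < 1 + q n by rewrite addr_gt0.
  rewrite ln_div ?posrE // e1 e2 /=.
  by field; exact: lt0r_neq0.
have Pl : (fun n => (n%:R `^ a * ln (n%:R : R))^-1) @ \oo --> (0 : R).
  apply: inv0_of_y; apply: (ger_cvgy _ lnn_y).
  near=> n; have n1 : (1 < n)%N by near: n.
  have nr : (1 : R) <= n%:R by rewrite ler1n ltnW.
  have l0 : 0 <= ln (n%:R : R) by rewrite ln_ge0.
  rewrite ler_peMl // -[X in X <= _](powRr0 (n%:R : R)).
  exact: (ler_powR nr (ltW a0)).
apply: (@squeeze_cvgr _ _ _ _
  (fun n => q n / (c * (n%:R `^ a)) * (ln ((n%:R + q n) / (1 + q n)) / ln (n%:R : R)) / (1 - a))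
  (fun n => q n / (c * (n%:R `^ a)) * (ln ((n%:R + q n) / (1 + q n)) / ln (n%:R : R)) / (1 - a)
     + 2 / (c * (1 - a)) * (n%:R `^ a * ln (n%:R : R))^-1)).
- near=> n; have n1 : (1 < n)%N by near: n.
  have n0 : (0 < n)%N by apply: ltn_trans n1.
  have qn0 := qpos _ n0.
  have nr : (1 : R) < n%:R by rewrite ltr1n.
  have l0 : 0 < ln (n%:R : R) by rewrite ln_gt0.
  have P0 : 0 < (n%:R : R) `^ a by rewrite powR_gt0 // ltr0n.
  rewrite ELR_Ss //.
  have /andP[h1 h2] := DB qn0 n0.
  set D := ln ((n%:R + q n) / (1 + q n)) in h1 h2 *.
  set P := (n%:R : R) `^ a in P0 *.
  set l := ln (n%:R : R) in l0 *.
  have e1 : q n / (c * P) * (D / l) / (1 - a) = (q n * D) / (c * (1 - a) * P * l).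
    by field; rewrite !gt_eqF.
  have e2 : q n / (c * P) * (D / l) / (1 - a) + 2 / (c * (1 - a)) * (P * l)^-1
      = (2 + q n * D) / (c * (1 - a) * P * l).
    by field; rewrite !gt_eqF.
  rewrite e2 e1; apply/andP; split.
    by rewrite ler_pM2r ?invr_gt0 ?mulr_gt0 //; lra.
  by rewrite ler_pM2r ?invr_gt0 ?mulr_gt0.
- have h : (fun n => q n / (c * (n%:R `^ a)) * (ln ((n%:R + q n) / (1 + q n)) / ln (n%:R : R)) / (1 - a))
     @ \oo --> (1 * (1 - a) / (1 - a) : R).
    by apply: cvgM; [apply: cvgM | exact: cvg_cst].
  by rewrite mul1r divff ?gt_eqF in h.
- have h : (fun n => q n / (c * (n%:R `^ a)) * (ln ((n%:R + q n) / (1 + q n)) / ln (n%:R : R)) / (1 - a)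
     + 2 / (c * (1 - a)) * (n%:R `^ a * ln (n%:R : R))^-1)
     @ \oo --> (1 * (1 - a) / (1 - a) + 2 / (c * (1 - a)) * 0 : R).
    apply: cvgD; first by apply: cvgM; [apply: cvgM | exact: cvg_cst].
    exact: cvgMl_tmp.
  by rewrite mul1r divff ?gt_eqF // mulr0 addr0 in h.
Unshelve. all: by end_near.
Qed.

End Lim.

Local Open Scope classical_set_scope.

Theorem proposition1p1 (R : realType) :
  (* (i) *)
  (forall q : nat -> R, (forall n, (0 < n)%N -> 0 < q n) ->
     (fun n : nat => q n * ln (n%:R : R)) @ \oo --> (0 : R) ->
     (fun n : nat => ELR (q n) n) @ \oo --> (1 : R)) /\
  (* (ii) *)
  (forall (q : nat -> R) (c : R), (forall n, (0 < n)%N -> 0 < q n) -> 0 < c ->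
     (fun n : nat => q n * ln (n%:R : R)) @ \oo --> c ->
     (fun n : nat => ELR (q n) n) @ \oo --> 1 + c) /\
  (* (iii) *)
  (forall q : nat -> R, (forall n, (0 < n)%N -> 0 < q n) ->
     (fun n : nat => q n * ln (n%:R : R)) @ \oo --> +oo ->
     (exists M : R, \forall n \near \oo, `|q n| <= M) ->
     (fun n : nat => ELR (q n) n / (q n * ln (n%:R : R))) @ \oo --> (1 : R)) /\
  (* (iv) *)
  (forall q : nat -> R, (forall n, (0 < n)%N -> 0 < q n) ->
     q @ \oo --> +oo ->
     (fun n : nat => q n / n%:R) @ \oo --> (0 : R) ->
     (fun n : nat => ELR (q n) n / (q n * ln ((n%:R + q n) / (1 + q n))))
        @ \oo --> (1 : R)) /\
  (* (iv), "in particular" *)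
  (forall (q : nat -> R) (c a : R), (forall n, (0 < n)%N -> 0 < q n) ->
     0 < c -> 0 < a < 1 ->
     (fun n : nat => q n / (c * (n%:R `^ a))) @ \oo --> (1 : R) ->
     (fun n : nat => ELR (q n) n / (c * (1 - a) * (n%:R `^ a) * ln (n%:R : R)))
        @ \oo --> (1 : R)) /\
  (* (v) *)
  ((forall (q : nat -> R) (c : R), (forall n, (0 < n)%N -> 0 < q n) -> 0 < c ->
     (fun n : nat => q n / (c * n%:R)) @ \oo --> (1 : R) ->
     (fun n : nat => ELR (q n) n / (c * ln ((1 + c) / c) * n%:R)) @ \oo --> (1 : R)) /\
   (fun c : R => c * ln ((1 + c) / c)) @ 0^'+ --> (0 : R) /\
   (fun c : R => c * ln ((1 + c) / c)) @ +oo --> (1 : R)) /\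
  (* (vi) *)
  (forall q : nat -> R, (forall n, (0 < n)%N -> 0 < q n) ->
     (fun n : nat => q n / n%:R) @ \oo --> +oo ->
     (fun n : nat => ELR (q n) n / n%:R) @ \oo --> (1 : R)).

Proof.
split; first exact: part1.
split; first exact: part2.
split; first exact: part3.
split; first exact: part4.
split; first exact: part4b.
split; first by split; [exact: part5 | split; [exact: clim0 | exact: climy]].
exact: part6.
Qed.
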